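(* Let $R$ be a commutative ring with identity and $I$ an ideal of $R$. Then the amalgamated duplication $R\bowtie I$ is a pm-ring if and only if $R$ is a pm-ring.
   Context: $R\bowtie I:=\{(r,r+i)\mid r\in R,\ i\in I\}$, a subring of $R\times R$. A commutative ring is a pm-ring if every prime ideal is contained in a unique maximal ideal. *)

(* Defs.v *)
From HB Require Import structures.
From mathcomp Require Import all_boot all_algebra ring.
Set Implicit Arguments. Unset Strict Implicit. Unset Printing Implicit Defensive.
Import GRing.Theory.
Local Open Scope ring_scope.

Definition is_ideal (R : comPzRingType) (S : {pred R}) : Prop :=
  [/\ 0 \in S,
      (forall x y, x \in S -> y \in S -> x + y \in S) &
      (forall r x, x \in S -> r * x \in S)].

Definition is_prime_ideal (R : comPzRingType) (P : {pred R}) : Prop :=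
  [/\ is_ideal P, 1 \notin P &
      (forall a b, a * b \in P -> a \in P \/ b \in P)].

Definition is_maximal_ideal (R : comPzRingType) (M : {pred R}) : Prop :=
  [/\ is_ideal M, 1 \notin M &
      (forall J : {pred R}, is_ideal J -> {subset M <= J} ->
         J =i M \/ (forall x, x \in J))].

Definition pm_ring (R : comPzRingType) : Prop :=
  forall P : {pred R}, is_prime_ideal P ->
    exists M : {pred R}, [/\ is_maximal_ideal M, {subset P <= M} &
      (forall M' : {pred R}, is_maximal_ideal M' -> {subset P <= M'} -> M' =i M)].

(* Amalgamated duplication R ⋈ I = {(r, r + i) | r in R, i in I},
   as a subring of R × R. *)
Record ideal (R : comPzRingType) := Ideal {
  ideal_pred :> {pred R};
  ideal_is_ideal : is_ideal ideal_pred }.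

Section Amalg.
Variables (R : comPzRingType) (I : ideal R).

Definition amalg_pred : {pred R * R} := fun x => x.2 - x.1 \in ideal_pred I.

Lemma amalg_subring_closed : GRing.subring_closed amalg_pred.
Proof.
case: (ideal_is_ideal I) => I0 ID IM.
have IN : forall x, x \in I -> - x \in I.
  by move=> x Hx; rewrite -mulN1r; apply: IM.
split.
- by rewrite /amalg_pred unfold_in /= subrr.
- move=> x y; rewrite /amalg_pred !unfold_in /= => Hx Hy.
  have -> : x.2 - y.2 - (x.1 - y.1) = (x.2 - x.1) + - (y.2 - y.1) by ring.
  by apply: ID => //; apply: IN.
- move=> x y; rewrite /amalg_pred !unfold_in /= => Hx Hy.
  have -> : x.2 * y.2 - x.1 * y.1 = x.2 * (y.2 - y.1) + y.1 * (x.2 - x.1) by ring.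
  by apply: ID; apply: IM.
Qed.

Definition amalg := {x : R * R | x \in amalg_pred}.
HB.instance Definition _ := [isSub for (@sval _ (fun x => x \in amalg_pred))
  : amalg -> (R * R)%type].
HB.instance Definition _ := [Choice of amalg by <:].
HB.instance Definition _ := GRing.SubChoice_isSubComPzRing.Build (R * R)%type
  amalg_pred amalg amalg_subring_closed.
End Amalg.

(* Main.v *)
Require Import Defs.
From mathcomp Require Import all_boot all_algebra.
From Stdlib Require Import Classical.
Set Implicit Arguments. Unset Strict Implicit. Unset Printing Implicit Defensive.
Import GRing.Theory.
Local Open Scope ring_scope.

Record retr (A R : comPzRingType) (f : A -> R) (d : R -> A) : Prop := Retr {
  f0 : f 0 = 0; fD : forall x y, f (x + y) = f x + f y;
  fN : forall x, f (- x) = - f x;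
  fM : forall x y, f (x * y) = f x * f y; f1 : f 1 = 1;
  d0 : d 0 = 0; dD : forall x y, d (x + y) = d x + d y;
  dM : forall x y, d (x * y) = d x * d y; d1 : d 1 = 1;
  fd : forall r, f (d r) = r }.

Definition preim_p (A B : Type) (g : A -> B) (S : {pred B}) : {pred A} :=
  fun x => g x \in S.

Lemma in_preim (A B : Type) (g : A -> B) (S : {pred B}) x :
  (x \in preim_p g S) = (g x \in S).
Proof. by rewrite unfold_in. Qed.

Lemma ideal_opp (A : comPzRingType) (S : {pred A}) x :
  is_ideal S -> x \in S -> - x \in S.
Proof. by case=> _ _ HM Hx; rewrite -mulN1r; apply: HM. Qed.

Lemma ideal_all (A : comPzRingType) (S : {pred A}) :
  is_ideal S -> 1 \in S -> forall x, x \in S.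
Proof. by case=> _ _ HM H1 x; rewrite -[x]mulr1; apply: HM. Qed.

Lemma preim_ideal (A B : comPzRingType) (g : A -> B) (S : {pred B}) :
  g 0 = 0 -> (forall x y, g (x + y) = g x + g y) ->
  (forall x y, g (x * y) = g x * g y) ->
  is_ideal S -> is_ideal (preim_p g S).
Proof.
move=> g0 gD gM [S0 SD SM]; split; rewrite ?in_preim ?g0 //.
- by move=> x y Hx Hy; rewrite in_preim gD; apply: SD; rewrite -in_preim.
- by move=> r x Hx; rewrite in_preim gM; apply: SM; rewrite -in_preim.
Qed.

Lemma preim_prime (A B : comPzRingType) (g : A -> B) (S : {pred B}) :
  g 0 = 0 -> (forall x y, g (x + y) = g x + g y) ->
  (forall x y, g (x * y) = g x * g y) -> g 1 = 1 ->
  is_prime_ideal S -> is_prime_ideal (preim_p g S).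
Proof.
move=> g0 gD gM g1 [SI S1 SP]; split.
- exact: preim_ideal.
- by rewrite in_preim g1.
- by move=> a b; rewrite !in_preim gM; apply: SP.
Qed.

Section Gen.
Context (A R : comPzRingType) (f : A -> R) (d : R -> A) (h : retr f d).

Lemma key (Q : {pred A}) : is_ideal Q -> (forall x, f x = 0 -> x \in Q) ->
  forall x, (x \in Q) = (d (f x) \in Q).
Proof.
move=> QI Hk x.
have Kk : x - d (f x) \in Q by apply: Hk; rewrite (fD h) (fN h) (fd h) subrr.
case: (QI) => _ QD _.
apply/idP/idP => H.
- have -> : d (f x) = x + - (x - d (f x)) by rewrite opprB addrC subrK.
  by apply: QD => //; apply: ideal_opp.
- have -> : x = (x - d (f x)) + d (f x) by rewrite subrK.
  exact: QD.
Qed.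

Lemma max_f (M : {pred R}) : is_maximal_ideal M -> is_maximal_ideal (preim_p f M).
Proof.
move=> [MI M1 MM]; split.
- by apply: preim_ideal => //; [exact: (f0 h)|exact: (fD h)|exact: (fM h)].
- by rewrite in_preim (f1 h).
move=> J JI sub.
have JJ : is_ideal (preim_p d J).
  by apply: preim_ideal => //; [exact: (d0 h)|exact: (dD h)|exact: (dM h)].
have sub' : {subset M <= preim_p d J}.
  by move=> m Hm; rewrite in_preim; apply: sub; rewrite in_preim (fd h).
case: (MM _ JJ sub') => [E|Hall]; last first.
  right; apply: ideal_all => //; rewrite -(d1 h).
  by have := Hall 1; rewrite in_preim.
left => x.
have Kf : forall y, f y = 0 -> y \in J.
  move=> y Hy; apply: sub; rewrite in_preim Hy; by case: MI.
by rewrite (key JI Kf) in_preim -E in_preim.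
Qed.

Lemma max_d (M : {pred A}) : is_maximal_ideal M ->
  (forall x, f x = 0 -> x \in M) -> is_maximal_ideal (preim_p d M).
Proof.
move=> [MI M1 MM] Kf; split.
- by apply: preim_ideal => //; [exact: (d0 h)|exact: (dD h)|exact: (dM h)].
- by rewrite in_preim (d1 h).
move=> J JI sub.
have JJ : is_ideal (preim_p f J).
  by apply: preim_ideal => //; [exact: (f0 h)|exact: (fD h)|exact: (fM h)].
have sub' : {subset M <= preim_p f J}.
  by move=> m Hm; rewrite in_preim; apply: sub; rewrite in_preim -(key MI Kf).
case: (MM _ JJ sub') => [E|Hall]; last first.
  right; apply: ideal_all => //; rewrite -(f1 h).
  by have := Hall 1; rewrite in_preim.
left => x.
by rewrite in_preim -(fd h x) -in_preim E (fd h).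
Qed.

Lemma pm_down : pm_ring A -> pm_ring R.
Proof.
move=> pmA P PP.
have PQ := preim_prime (f0 h) (fD h) (fM h) (f1 h) PP.
have Kf : forall x, f x = 0 -> x \in preim_p f P.
  by move=> x Hx; rewrite in_preim Hx; case: PP => -[].
case: (pmA _ PQ) => M' [M'max sub uniq].
have Kf' : forall x, f x = 0 -> x \in M' by move=> x /Kf /sub.
exists (preim_p d M'); split.
- exact: max_d.
- by move=> p Hp; rewrite in_preim; apply: sub; rewrite in_preim (fd h).
move=> N Nmax subN x.
have E := uniq _ (max_f Nmax) (fun y Hy => subN _ (Hy : y \in preim_p f P)).
by rewrite in_preim -E in_preim (fd h).
Qed.

Lemma pm_up (Q : {pred A}) : pm_ring R -> is_prime_ideal Q ->
  (forall x, f x = 0 -> x \in Q) ->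
  exists M : {pred A}, [/\ is_maximal_ideal M, {subset Q <= M} &
      (forall M' : {pred A}, is_maximal_ideal M' -> {subset Q <= M'} -> M' =i M)].
Proof.
move=> pmR QP Kf.
have PP := preim_prime (d0 h) (dD h) (dM h) (d1 h) QP.
have QI : is_ideal Q by case: QP.
case: (pmR _ PP) => N [Nmax sub uniq].
exists (preim_p f N); split.
- exact: max_f.
- by move=> x Hx; rewrite in_preim; apply: sub; rewrite in_preim -(key QI Kf).
move=> M' M'max subM x.
have Kf' : forall y, f y = 0 -> y \in M' by move=> y /Kf /subM.
have M'I : is_ideal M' by case: M'max.
have E := uniq _ (max_d M'max Kf') (fun y Hy => subM _ (Hy : y \in preim_p d Q)).
by rewrite (key M'I Kf') in_preim -in_preim E.
Qed.
End Gen.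

Section Am.
Context (R : comPzRingType) (I : ideal R).

Lemma diag_in (r : R) : (r, r) \in amalg_pred I.
Proof. by rewrite unfold_in /amalg_pred /= subrr; case: (ideal_is_ideal I). Qed.

Definition dg (r : R) : amalg I := Sub (r, r) (diag_in r).
Definition p1 (x : amalg I) : R := (val x).1.
Definition p2 (x : amalg I) : R := (val x).2.

Lemma vdg r : val (dg r) = (r, r). Proof. by rewrite /dg SubK. Qed.

Lemma retr_gen (g : R * R -> R) : g = fst \/ g = snd ->
  retr (fun x : amalg I => g (val x)) dg.
Proof.
move=> Hg; split.
- by rewrite rmorph0; case: Hg => ->.
- by move=> x y; rewrite rmorphD; case: Hg => ->.
- by move=> x; rewrite [val (- x)]rmorphN; case: Hg => ->.
- by move=> x y; rewrite rmorphM; case: Hg => ->.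
- by rewrite rmorph1; case: Hg => ->.
- by apply: val_inj; rewrite vdg rmorph0.
- by move=> x y; apply: val_inj; rewrite rmorphD !vdg.
- by move=> x y; apply: val_inj; rewrite rmorphM !vdg.
- by apply: val_inj; rewrite vdg rmorph1.
- by move=> r; rewrite vdg; case: Hg => ->.
Qed.
End Am.

Theorem corollary3p5 (R : comPzRingType) (I : ideal R) :
  pm_ring (amalg I) <-> pm_ring R.
Proof.
have h1 := retr_gen I (or_introl erefl).
have h2 := retr_gen I (or_intror erefl).
split; first exact: pm_down h1.
move=> pmR Q QP.
case: (classic (forall x : amalg I, (val x).1 = 0 -> x \in Q)) => H.
  exact (pm_up h1 pmR QP H).
apply: (pm_up h2 pmR QP).
move: H => /not_all_ex_not [a Ha] b b2.
have [a1 aQ] := imply_to_and _ _ Ha.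
case: QP => [[Q0 _ _] _ Qp].
have : a * b \in Q.
  have -> : a * b = 0.
    apply: val_inj; rewrite rmorphM rmorph0.
    change (val a * val b = 0); move: a1 b2; case: (val a) => x1 x2; case: (val b) => y1 y2 /= -> ->.
    by apply/eqP; rewrite xpair_eqE /= mul0r mulr0 eqxx.
  exact: Q0.
by case/Qp => //.
Qed.
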